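(* Let $L:\mathbb{R}^d\setminus\{0\}\to\mathbb{R}$ be twice differentiable and scale invariant, and $\rho:=\max_{\|x\|_2=1}\|\nabla^2L(x)\|_2<\infty$. For any $x\in\mathbb{R}^d\setminus\{0\}$ and $v\in\mathbb{R}^d$ with $\langle x,v\rangle=0$, $$L(x+v)-L(x)\le\langle v,\nabla L(x)\rangle+\frac{\rho\|v\|_2^2}{2\|x\|_2^2}.$$
   Context: Scale invariant means $L(cx)=L(x)$ for all $c>0$ and $x\ne0$. *)

(* Defs.v *)
From HB Require Import structures.
From mathcomp Require Import all_boot all_order all_algebra.
From mathcomp Require Import all_classical all_reals all_analysis.
Set Implicit Arguments. Unset Strict Implicit. Unset Printing Implicit Defensive.
Import Order.TTheory GRing.Theory Num.Theory.
Import numFieldNormedType.Exports.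
Local Open Scope classical_set_scope.
Local Open Scope ring_scope.

Definition basis_vec (R : realType) (d : nat) (i : 'I_d) : 'rV[R]_d :=
  delta_mx 0 i.

Definition dotp (R : realType) (d : nat) (x y : 'rV[R]_d) : R :=
  \sum_(i < d) x 0 i * y 0 i.
Definition norm2 (R : realType) (d : nat) (x : 'rV[R]_d) : R :=
  Num.sqrt (dotp x x).

Definition grad (R : realType) (d : nat) (f : 'rV[R]_d -> R) (x : 'rV[R]_d)
  : 'rV[R]_d := \row_i ('D_(basis_vec R i) f x).

Definition hessian (R : realType) (d : nat) (f : 'rV[R]_d -> R) (x : 'rV[R]_d)
  : 'M[R]_d :=
  \matrix_(i, j) ('D_(basis_vec R j) (fun y => grad f y 0 i) x).

Definition opnorm2 (R : realType) (d : nat) (A : 'M[R]_d) : R :=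
  sup [set norm2 (u *m A^T) | u in [set u : 'rV[R]_d | norm2 u = 1]].

Definition scale_invariant (R : realType) (d : nat) (L : 'rV[R]_d -> R) : Prop :=
  forall (c : R) (x : 'rV[R]_d), 0 < c -> x != 0 -> L (c *: x) = L x.

Definition twice_differentiable_punctured (R : realType) (d : nat)
  (L : 'rV[R]_d -> R) : Prop :=
  forall x : 'rV[R]_d, x != 0 -> differentiable L x /\ differentiable (grad L) x.

(* Main.v *)
Require Import Defs.
Set Warnings "-notation-overridden,-ambiguous-paths,-notation-incompatible-prefix".
From HB Require Import structures.
From mathcomp Require Import all_boot all_order all_algebra.
From mathcomp Require Import all_classical all_reals all_analysis.
From mathcomp Require Import ring lra.
Import Order.TTheory GRing.Theory Num.Theory.
Import numFieldNormedType.Exports.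
Local Open Scope classical_set_scope.
Local Open Scope ring_scope.
Section Alg.
Variables (R : realType) (d : nat).
Implicit Types (a b c : 'rV[R]_d).

Lemma dotpC a b : dotp a b = dotp b a.
Proof. by apply: eq_bigr => i _; rewrite mulrC. Qed.

Lemma dotpDl a b c : dotp (a + b) c = dotp a c + dotp b c.
Proof. by rewrite /dotp -big_split; apply: eq_bigr => i _; rewrite mxE mulrDl. Qed.

Lemma dotpZl (k : R) a b : dotp (k *: a) b = k * dotp a b.
Proof. by rewrite /dotp mulr_sumr; apply: eq_bigr => i _; rewrite mxE mulrA. Qed.

Lemma dotpNl a b : dotp (- a) b = - dotp a b.
Proof. by rewrite -scaleN1r dotpZl mulN1r. Qed.

Lemma dotp_ge0 a : 0 <= dotp a a.
Proof. by apply: sumr_ge0 => i _; rewrite -expr2 sqr_ge0. Qed.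

Lemma dotp_eq0 a : dotp a a = 0 -> a = 0.
Proof.
move=> /eqP; rewrite psumr_eq0 => [/allP H|i _]; last by rewrite -expr2 sqr_ge0.
apply/rowP => i; rewrite mxE; have := H i (mem_index_enum _).
by rewrite /= mulf_eq0 orbb => /eqP.
Qed.

Lemma norm2_ge0 a : 0 <= norm2 a.
Proof. exact: sqrtr_ge0. Qed.

Lemma norm2_sq a : norm2 a ^+ 2 = dotp a a.
Proof. by rewrite sqr_sqrtr // dotp_ge0. Qed.

Lemma norm2Z (k : R) a : norm2 (k *: a) = `|k| * norm2 a.
Proof.
rewrite /norm2 dotpZl dotpC dotpZl mulrA -expr2 sqrtrM ?sqr_ge0 //.
by rewrite sqrtr_sqr.
Qed.

Lemma CS a b : dotp a b <= norm2 a * norm2 b.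
Proof.
set al := norm2 a; set be := norm2 b.
have H : 0 <= dotp (be *: a - al *: b) (be *: a - al *: b) by exact: dotp_ge0.
rewrite dotpDl dotpNl !dotpZl ![dotp _ (_ - _)]dotpC !dotpDl !dotpNl !dotpZl in H.
rewrite -!norm2_sq -/al -/be (dotpC b a) in H.
have e : 0 <= al * be * (al * be - dotp a b) by nra.
have [|] := eqVneq (al * be) 0.
  move=> /eqP; rewrite mulf_eq0 => /orP[]/eqP z.
    have a0 : a = 0 by apply: dotp_eq0; rewrite -norm2_sq -?/al -?/be z expr0n.
    by rewrite a0 /dotp big1 ?mulr_ge0 ?norm2_ge0 // => i _; rewrite mxE mul0r.
  have b0 : b = 0 by apply: dotp_eq0; rewrite -norm2_sq -?/al -?/be z expr0n.
  by rewrite b0 /dotp big1 ?mulr_ge0 ?norm2_ge0 // => i _; rewrite mxE mulr0.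
move=> nz; have p : 0 < al * be by rewrite lt_def nz mulr_ge0 ?norm2_ge0.
by rewrite -subr_ge0; move: e; rewrite pmulr_rge0.
Qed.

Lemma CSabs a b : `|dotp a b| <= norm2 a * norm2 b.
Proof.
rewrite ler_norml CS andbT lerNl -dotpNl.
by apply: le_trans (CS _ _) _; rewrite -scaleN1r norm2Z normrN1 mul1r.
Qed.

Lemma norm2_0 : norm2 (0 : 'rV[R]_d) = 0.
Proof. by rewrite /norm2 /dotp big1 ?sqrtr0 // => i _; rewrite mxE mul0r. Qed.

Lemma entry_dotp (A : 'M[R]_d) u i : (u *m A^T) 0 i = dotp u (row i A).
Proof. by rewrite !mxE; apply: eq_bigr => j _; rewrite !mxE. Qed.

Lemma opnorm_ub (A : 'M[R]_d) :
  has_ubound [set norm2 (u *m A^T) | u in [set u : 'rV[R]_d | norm2 u = 1]].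
Proof.
exists (Num.sqrt (\sum_i norm2 (row i A) ^+ 2)) => _ [u /= u1 <-].
rewrite /norm2 ler_sqrt; last by apply: sumr_ge0 => i _; rewrite sqr_ge0.
apply: ler_sum => i _; rewrite -expr2 entry_dotp -real_normK ?num_real //.
rewrite lerXn2r ?nnegrE ?normr_ge0 ?norm2_ge0 //.
by apply: le_trans (CSabs _ _) _; rewrite u1 mul1r.
Qed.

Lemma opnorm_bound (A : 'M[R]_d) w : norm2 (w *m A^T) <= opnorm2 A * norm2 w.
Proof.
have [->|w0] := eqVneq w 0; first by rewrite mul0mx norm2_0 mulr0.
have c0 : 0 < norm2 w.
  rewrite lt_def norm2_ge0 andbT; apply/eqP => h; move/eqP: w0; apply.
  by apply: dotp_eq0; rewrite -norm2_sq h expr0n.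
have u1 : norm2 ((norm2 w)^-1 *: w) = 1.
  by rewrite norm2Z gtr0_norm ?invr_gt0 // mulVf // gt_eqF.
have := ub_le_sup (opnorm_ub A) (ex_intro2 _ _ _ u1 erefl).
rewrite -scalemxAl norm2Z gtr0_norm ?invr_gt0 // -/(opnorm2 A).
by rewrite ler_pdivrMl // mulrC.
Qed.

End Alg.
Arguments dotpC {R d}.
Arguments dotpDl {R d}.
Arguments dotpZl {R d}.
Arguments dotpNl {R d}.
Arguments dotp_ge0 {R d}.
Arguments dotp_eq0 {R d}.
Arguments norm2_ge0 {R d}.
Arguments norm2_sq {R d}.
Arguments norm2Z {R d}.
Arguments CS {R d}.
Arguments norm2_0 {R d}.
Arguments opnorm_bound {R d}.
Section Ana.
Variables (R : realType) (d : nat).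
Notation V := 'rV[R]_d.

Lemma line_fun (f : V -> R) (a v : V) t :
  (fun h : R => h^-1 *: (((fun s : R => f (a + s *: v)) \o shift t) (h *: 1)
        - (fun s : R => f (a + s *: v)) t)) =
  (fun h : R => h^-1 *: ((f \o shift (a + t *: v)) (h *: v) - f (a + t *: v))).
Proof.
apply: funext => h /=; congr (_ *: (f _ - _)).
by rewrite /shift /= scalerDl [h *: 1]mulr1 addrCA addrA.
Qed.

Lemma line_derivable (f : V -> R) (a v : V) t :
  derivable (fun s : R => f (a + s *: v)) t 1 = derivable f (a + t *: v) v.
Proof. by rewrite /derivable line_fun. Qed.

Lemma line_derive (f : V -> R) (a v : V) t :
  'D_1 (fun s : R => f (a + s *: v)) t = 'D_v f (a + t *: v).
Proof. by rewrite /derive line_fun. Qed.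

Lemma dir_grad (f : V -> R) a w : differentiable f a ->
  'D_w f a = dotp w (grad f a).
Proof.
move=> df; rewrite deriveE // {1}(row_sum_delta w) linear_sum.
apply: eq_bigr => i _; rewrite linearZ /= -deriveE // mxE.
by [].
Qed.

Lemma scale_D (f : V -> R) (c k : R) y e :
  differentiable f y -> differentiable f (c *: y) ->
  (\forall z \near y, f (c *: z) = k * f z) ->
  c * 'D_e f (c *: y) = k * 'D_e f y.
Proof.
move=> dy dcy nr.
have h1 : 'D_e (fun z => f (c *: z)) y = 'D_(c *: e) f (c *: y).
  rewrite /derive; congr (lim (_ @ 0^')); apply: funext => h /=.
  by rewrite /shift /=; congr (_ *: (f _ - _)); rewrite scalerDr !scalerA mulrC.
have h2 : 'D_e (fun z => f (c *: z)) y = 'D_e (fun z => k * f z) y.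
  exact: near_eq_derive.
rewrite [RHS]deriveE // linearZ /= -deriveE // in h1.
rewrite -[_ * _]/(c *: _) -h1 h2 deriveMl //; exact: diff_derivable.
Qed.

Lemma near_nz (y : V) : y != 0 -> \forall z \near y, z != 0.
Proof.
move=> y0; apply/nbhs_ballP; exists `|y|; first by rewrite /= normr_gt0.
move=> z; rewrite -ball_normE /= => yz; apply/eqP => z0; move: yz.
by rewrite z0 subr0 ltxx.
Qed.

Variable (L : V -> R).
Hypothesis hL2 : twice_differentiable_punctured L.
Hypothesis hsc : scale_invariant L.

Lemma diff_g (i : 'I_d) y : y != 0 -> differentiable (fun z => grad L z 0 i) y.
Proof.
move=> y0; have := differentiable_comp (hL2 _ y0).2 (differentiable_coord _ 0 i).
by [].
Qed.

Lemma nz_scale (c : R) (y : V) : 0 < c -> y != 0 -> c *: y != 0.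
Proof. by move=> c0 y0; rewrite scaler_eq0 negb_or gt_eqF. Qed.

Arguments nz_scale {c y}.
Arguments diff_g i {y}.

Lemma grad_scale (c : R) z e : 0 < c -> z != 0 ->
  'D_e L (c *: z) = c^-1 * 'D_e L z.
Proof.
move=> c0 z0.
have H : c * 'D_e L (c *: z) = 1 * 'D_e L z.
  apply: scale_D; [exact: (hL2 _ z0).1 | exact: (hL2 _ (nz_scale c0 z0)).1 |].
  by near=> w; rewrite mul1r hsc //; near: w; exact: near_nz.
by rewrite mul1r in H; rewrite -H mulrA mulVf ?mul1r // gt_eqF.
Unshelve. all: by end_near.
Qed.

Lemma hess_scale (c : R) y i j : 0 < c -> y != 0 ->
  hessian L (c *: y) i j = c^-2 * hessian L y i j.
Proof.
move=> c0 y0; rewrite !mxE.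
have H : c * 'D_(basis_vec R j) (fun z => grad L z 0 i) (c *: y) =
    c^-1 * 'D_(basis_vec R j) (fun z => grad L z 0 i) y.
  apply: scale_D; [exact: diff_g y0 | exact: diff_g (nz_scale c0 y0) |].
  near=> w; rewrite !mxE grad_scale //; near: w; exact: near_nz.
have cn : c != 0 by rewrite gt_eqF.
apply: (mulfI cn); rewrite H mulrA; congr (_ * _).
by rewrite expr2 invfM mulrA mulfV // mul1r.
Unshelve. all: by end_near.
Qed.

Lemma second_dir (v y : V) : y != 0 ->
  is_derive y v (fun z => 'D_v L z) (dotp v (v *m (hessian L y)^T)).
Proof.
move=> y0.
pose h (i : 'I_d) := fun z : V => v 0 i * grad L z 0 i.
have hd i : is_derive y v (h i) (v 0 i * 'D_v (fun z => grad L z 0 i) y).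
  apply: DeriveDef; last by apply: deriveMl; exact/diff_derivable/diff_g.
  apply: derivableM; [exact: derivable_cst | exact/diff_derivable/diff_g].
have := is_derive_sum hd.
rewrite fct_sumE => G.
have -> : dotp v (v *m (hessian L y)^T) =
    \sum_(i < d) v 0 i * 'D_v (fun z => grad L z 0 i) y.
  apply: eq_bigr => i _; congr (_ * _).
  rewrite dir_grad; last exact: diff_g.
  rewrite !mxE; apply: eq_bigr => j _.
  by rewrite !mxE.
apply: near_eq_is_derive G.
near=> z; rewrite dir_grad /dotp; last first.
  by apply: (hL2 _ _).1; near: z; exact: near_nz.
by apply: eq_bigr => i _; rewrite /h.
Unshelve. all: by end_near.
Qed.

End Ana.
Arguments line_derivable {R d}.
Arguments line_derive {R d}.
Arguments dir_grad {R d}.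
Arguments hess_scale {R d L}.
Arguments second_dir {R d L}.
Lemma taylor2 (R : realType) (f : R -> R) (M : R) :
  (forall t, derivable f t 1) -> (forall t, derivable (derive1 f) t 1) ->
  (forall t, derive1 (derive1 f) t <= M) ->
  f 1 - f 0 <= derive1 f 0 + M / 2.
Proof.
move=> df ddf bd.
set a := derive1 f 0; set b := M / 2.
pose k : R -> R := f - a *: (@id R) - b *: (@id R) ^+ 2.
have kd (t : R) : is_derive t 1 k (derive1 f t - a - M * t).
  apply: is_derive_eq; first by apply: is_deriveB; apply: is_deriveB; exact: derivableP.
  rewrite -derive1E /b /= [a%:A]mulr1 [(_ * _)%:A]mulr1 expr1; rewrite /GRing.scale /=.
  by field.
have kc : {within `[0, 1], continuous k}.
  apply: derivable_within_continuous => t _; exact: (kd t).(ex_derive).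
have [c c01 Hc] := MVT ltr01 (fun t _ => kd t) kc.
have c0 : 0 < c by move: c01; rewrite in_itv => /andP[].
have fdc (t : R) : is_derive t 1 (derive1 f) (derive1 (derive1 f) t).
  by rewrite derive1E; exact: derivableP.
have fc : {within `[0, c], continuous (derive1 f)}.
  apply: derivable_within_continuous => t _; exact: ddf.
have [c2 _ Hc2] := MVT c0 (fun t _ => fdc t) fc.
have : k 1 - k 0 <= 0.
  rewrite Hc subr0 mulr1.
  have : derive1 f c - a <= M * c by rewrite /a Hc2 subr0 ler_wpM2r // ltW.
  lra.
rewrite /k !fctE /= expr1n expr0n /= scaler0 [a%:A]mulr1 [b *: 1]mulr1.
lra.
Qed.

Lemma inv_le (R : realType) (a b : R) : 0 < a -> a <= b -> b^-1 <= a^-1.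
Proof.
move=> a0 ab; rewrite lef_pV2 ?posrE //; exact: lt_le_trans ab.
Qed.

Theorem mainTheorem4 (R : realType) (d : nat) (L : 'rV[R]_d -> R) (rho : R)
  (hL2 : twice_differentiable_punctured L)
  (hsc : scale_invariant L)
  (hrho_ub : forall x : 'rV[R]_d, norm2 x = 1 -> opnorm2 (hessian L x) <= rho)
  (hrho_att : exists2 x : 'rV[R]_d, norm2 x = 1 & opnorm2 (hessian L x) = rho)
  (x v : 'rV[R]_d) (hx : x != 0) (hxv : dotp x v = 0) :
  L (x + v) - L x <= dotp v (grad L x) + rho * norm2 v ^+ 2 / (2 * norm2 x ^+ 2).
Proof.
have n2gt0 (y : 'rV[R]_d) : y != 0 -> 0 < norm2 y.
  move=> y0; rewrite lt_def norm2_ge0 andbT; apply/eqP => h; move/eqP: y0; apply.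
  by apply: dotp_eq0; rewrite -norm2_sq h expr0n.
have nx := n2gt0 _ hx.
have quad t : dotp (x + t *: v) (x + t *: v) = dotp x x + t ^+ 2 * dotp v v.
  rewrite dotpDl !(dotpC _ (x + _)) !dotpDl !dotpZl (dotpC v x) hxv.
  rewrite (dotpC x (t *: v)) (dotpC v (t *: v)) !dotpZl (dotpC v x) hxv; ring.
have gnorm t : norm2 x ^+ 2 <= norm2 (x + t *: v) ^+ 2.
  by rewrite !norm2_sq quad lerDl mulr_ge0 ?sqr_ge0 ?dotp_ge0.
have gnz t : x + t *: v != 0.
  apply/eqP => h; have := gnorm t; rewrite h norm2_0 expr0n /=.
  by rewrite leNgt exprn_gt0.
have rho0 : 0 <= rho.
  case: hrho_att => u u1 <-; have := opnorm_bound (hessian L u) u.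
  by rewrite u1 mulr1; apply: le_trans; exact: norm2_ge0.
pose phi t := L (x + t *: v).
have d1 : derive1 phi = fun t => 'D_v L (x + t *: v).
  by apply: funext => t; rewrite derive1E line_derive.
set M := rho * norm2 v ^+ 2 / norm2 x ^+ 2.
have bound t : dotp v (v *m (hessian L (x + t *: v))^T) <= M.
  set y := x + t *: v.
  have c0 := n2gt0 _ (gnz t); set c := norm2 y in c0.
  set n := c^-1 *: y.
  have yn : y = c *: n by rewrite /n scalerA mulfV ?gt_eqF // scale1r.
  have n0 : n != 0 by rewrite /n scaler_eq0 negb_or invr_eq0 gt_eqF // gnz.
  have n1 : norm2 n = 1 by rewrite norm2Z gtr0_norm ?invr_gt0 // mulVf // gt_eqF.
  have HT : (hessian L y)^T = c^-2 *: (hessian L n)^T.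
    by apply/matrixP => i j; rewrite [LHS]mxE yn hess_scale // !mxE.
  rewrite HT -scalemxAr (dotpC v) dotpZl (dotpC _ v).
  have B1 : dotp v (v *m (hessian L n)^T) <= rho * norm2 v ^+ 2.
    apply: le_trans (CS _ _) _.
    apply: le_trans (ler_wpM2l (norm2_ge0 v) (opnorm_bound _ v)) _.
    by rewrite mulrCA -expr2 ler_wpM2r ?sqr_ge0 // hrho_ub.
  apply: le_trans (ler_wpM2l _ B1) _; first by rewrite invr_ge0 exprn_ge0 // ltW.
  rewrite /M mulrC ler_wpM2l ?mulr_ge0 ?sqr_ge0 ?norm2_ge0 //.
  apply: inv_le; [exact: exprn_gt0 | exact: gnorm].
have T : phi 1 - phi 0 <= derive1 phi 0 + M / 2.
  apply: taylor2.
  - move=> s; rewrite /phi line_derivable.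
    exact/diff_derivable/(hL2 _ (gnz s)).1.
  - move=> s; rewrite d1 (line_derivable (fun z => 'D_v L z)).
    exact: (second_dir hL2 v _ (gnz s)).(ex_derive).
  - move=> s; rewrite d1 derive1E (line_derive (fun z => 'D_v L z)).
    by rewrite (second_dir hL2 v _ (gnz s)).(derive_val).
move: T; rewrite d1 /phi /= scale1r scale0r addr0 (dir_grad L x v); last exact: (hL2 _ hx).1.
suff -> : M / 2 = rho * norm2 v ^+ 2 / (2 * norm2 x ^+ 2) by [].
rewrite /M invfM; field; by rewrite gt_eqF.
Qed.
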